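(* Let $f=\sum_{J\in\mathbb{N}^n} a_J x^J$ be a nonzero real polynomial, let $\mathcal{M}$ be the set of $P\in\mathbb{N}^n$ with $a_P\neq 0$, and fix an integer $k\ge 0$. Let $M$ be the matrix whose rows are indexed by the vectors $I\in\{0,1\}^n$ with $|I|=k$, whose columns are indexed by the finitely many $J\in\mathbb{N}^n$ such that $I+J\in\mathcal{M}$ for some such $I$, and whose entries are $M_{I,J}=a_{I+J}$. Let $B=M^T M$. Then $$\mathrm{Tr}(B^2)\leq |\mathcal{M}|\,\mathrm{Tr}(B)\left(\sum_{R \in \mathcal{M}} a_R^2\right).$$
   Context: For $\alpha\in\mathbb{N}^n$, $x^\alpha = x_1^{\alpha_1}\cdots x_n^{\alpha_n}/(\alpha_1!\cdots\alpha_n!)$ (scaled monomial basis). For $I\in\{0,1\}^n$, $|I|=\sum_i I_i$. *)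

(* Defs.v *)
From mathcomp Require Import all_boot all_order all_algebra.
From mathcomp Require Import finmap mpoly.
Set Implicit Arguments. Unset Strict Implicit. Unset Printing Implicit Defensive.
Import Order.TTheory GRing.Theory Num.Theory.
Local Open Scope ring_scope.

Section Defs.
Variables (R : realFieldType) (n : nat).

(* Coefficient a_J of f in the scaled monomial basis x^J = x^J / J! :
   f = \sum_J a_J x^J/J!, so a_J = (standard coefficient of x^J) * J!. *)
Definition scoef (f : {mpoly R[n]}) (J : 'X_{1..n}) : R :=
  f@_J * (\prod_(i < n) (J i)`!)%:R.

Definition rowidx (k : nat) : seq 'X_{1..n} :=
  [seq [multinom (nat_of_bool (b i)) | i < n]
     | b : {ffun 'I_n -> bool} <- enum [pred b : {ffun 'I_n -> bool} | (\sum_(i < n) nat_of_bool (b i) == k)%N]].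

Definition colidx (f : {mpoly R[n]}) (k : nat) : seq 'X_{1..n} :=
  undup [seq [multinom (P i - Q i)%N | i < n]
          | P : 'X_{1..n} <- msupp f,
            Q : 'X_{1..n} <- [seq Q : 'X_{1..n} <- rowidx k | [forall i : 'I_n, (Q i <= P i)%N]]].

Definition Mmat (f : {mpoly R[n]}) (k : nat)
  : 'M[R]_(size (rowidx k), size (colidx f k)) :=
  \matrix_(i, j) scoef f ((nth 0%MM (rowidx k) i) + (nth 0%MM (colidx f k) j))%MM.

Definition Bmat (f : {mpoly R[n]}) (k : nat) := (Mmat f k)^T *m Mmat f k.

End Defs.

(* Main.v *)
Require Import Defs.
From mathcomp Require Import all_boot all_order all_algebra.
From mathcomp Require Import finmap mpoly.
Import Order.TTheory GRing.Theory Num.Theory.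
Local Open Scope ring_scope.
From mathcomp Require Import ring lra.
Set Implicit Arguments. Unset Strict Implicit. Unset Printing Implicit Defensive.
Section K.
Variable R : realFieldType.

Lemma quad4 (x y z w : R) : 2 * (x * y * (z * w)) <= `|x| * `|z| * (y ^+ 2 + w ^+ 2).
Proof.
have h1 : x * y * (z * w) <= `|x| * `|z| * (`|y| * `|w|).
  rewrite (le_trans (ler_norm _)) // !normrM; rewrite le_eqVlt; apply/orP; left; apply/eqP; ring.
have h2 : 2 * (`|y| * `|w|) <= y ^+ 2 + w ^+ 2.
  rewrite -(real_normK (num_real y)) -(real_normK (num_real w)).
  have := sqr_ge0 (`|y| - `|w|); rewrite sqrrB; lra.
have h3 : 0 <= `|x| * `|z| by rewrite mulr_ge0.
rewrite (le_trans (ler_wpM2l _ h1)) //.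
rewrite mulrCA ler_wpM2l //.
Qed.

Lemma key m p (A : 'M[R]_(m, p)) (c : R) :
  (forall i, (\sum_j `|A i j|) ^+ 2 <= c) ->
  (forall j, (\sum_i `|A i j|) ^+ 2 <= c) ->
  \tr ((A^T *m A) *m (A^T *m A)) <= c * \tr (A^T *m A).
Proof.
move=> Hr Hc.
set r := fun i => \sum_j `|A i j|.
set s := fun j => \sum_i `|A i j|.
have rs i j : r i * s j <= c.
  have r0 : 0 <= r i by apply: sumr_ge0 => *.
  have s0 : 0 <= s j by apply: sumr_ge0 => *.
  have c0 : 0 <= c by rewrite (le_trans (sqr_ge0 (r i))) //; exact: Hr.
  have : (r i * s j) ^+ 2 <= c ^+ 2.
    rewrite exprMn expr2 ler_pM //; [exact: sqr_ge0|exact: sqr_ge0|exact: Hr|exact: Hc].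
  by rewrite ler_pXn2r // ?nnegrE ?mulr_ge0.
pose T1 := \sum_j \sum_j' \sum_i \sum_i' `|A i j| * `|A i' j'| * A i j' ^+ 2.
pose T2 := \sum_j \sum_j' \sum_i \sum_i' `|A i j| * `|A i' j'| * A i' j ^+ 2.
have E : \tr ((A^T *m A) *m (A^T *m A)) = \sum_j \sum_j' \sum_i \sum_i' (A i j * A i j' * (A i' j' * A i' j)).
  rewrite /mxtrace; apply: eq_bigr => j _; rewrite mxE; apply: eq_bigr => j' _.
  rewrite !mxE mulr_suml; apply: eq_bigr => i _; rewrite mulr_sumr; apply: eq_bigr => i' _.
  by rewrite !mxE.
have ET : \tr (A^T *m A) = \sum_i \sum_j A i j ^+ 2.
  rewrite /mxtrace exchange_big; apply: eq_bigr => i _.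
  by rewrite mxE; apply: eq_bigr => j _; rewrite !mxE expr2.
have H1 : 2 * \tr ((A^T *m A) *m (A^T *m A)) <= T1 + T2.
  rewrite E /T1 /T2 mulr_sumr -big_split /=; apply: ler_sum => j _.
  rewrite mulr_sumr -big_split /=; apply: ler_sum => j' _.
  rewrite mulr_sumr -big_split /=; apply: ler_sum => i _.
  rewrite mulr_sumr -big_split /=; apply: ler_sum => i' _.
  by rewrite -mulrDr quad4.
have ET1 : T1 = \sum_i \sum_j' A i j' ^+ 2 * (r i * s j').
  rewrite /T1 exchange_big /=.
  under eq_bigr do rewrite exchange_big /=.
  rewrite exchange_big /=; apply: eq_bigr => i _; apply: eq_bigr => j' _.
  rewrite /r /s mulr_suml mulr_sumr; apply: eq_bigr => j _.
  rewrite mulr_sumr mulr_sumr; apply: eq_bigr => i' _; ring.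
have ET2 : T2 = T1.
  rewrite /T2 /T1 exchange_big /=; apply: eq_bigr => j _; apply: eq_bigr => j' _.
  rewrite exchange_big /=; apply: eq_bigr => i _; apply: eq_bigr => i' _; ring.
have HT1 : T1 <= c * \tr (A^T *m A).
  rewrite ET1 ET mulr_sumr; apply: ler_sum => i _; rewrite mulr_sumr; apply: ler_sum => j _.
  by rewrite mulrC ler_wpM2r // sqr_ge0.
rewrite ET2 in H1; lra.
Qed.
End K.
Section C.
Variables (R : realFieldType) (n : nat).

Lemma rowidx_uniq k : uniq (rowidx n k).
Proof.
rewrite /rowidx map_inj_in_uniq ?enum_uniq // => b1 b2 _ _ /mnmP H.
apply/ffunP => i; have := H i; rewrite !mnmE.
by case: (b1 i); case: (b2 i).
Qed.

Lemma colidx_uniq (f : {mpoly R[n]}) k : uniq (colidx f k).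
Proof. exact: undup_uniq. Qed.

Lemma scoef0 (f : {mpoly R[n]}) P : P \notin msupp f -> scoef f P = 0.
Proof. by move=> /memN_msupp_eq0 h; rewrite /scoef h mul0r. Qed.

Lemma sum_sub (T : eqType) (t u : seq T) (g : T -> R) :
  uniq t -> uniq u -> {subset t <= u} -> (forall x, 0 <= g x) ->
  \sum_(x <- t) g x <= \sum_(x <- u) g x.
Proof.
move=> ut uu sub g0.
have pe : perm_eq [seq x <- u | x \in t] t.
  apply: uniq_perm => //; first exact: filter_uniq.
  by move=> x; rewrite mem_filter; case xt: (x \in t); rewrite ?(sub _ xt).
rewrite -(perm_big _ pe) big_filter big_mkcond /=.
by apply: ler_sum => x _; case: ifP.
Qed.

Lemma sumc (T : Type) (u : seq T) (c : R) : \sum_(y <- u) c = c *+ size u.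
Proof. by elim: u => [|y u IH]; rewrite ?big_nil ?big_cons ?IH ?mulrS. Qed.

Lemma cs (T : Type) (u : seq T) (a : T -> R) :
  (\sum_(x <- u) `|a x|) ^+ 2 <= (size u)%:R * \sum_(x <- u) a x ^+ 2.
Proof.
rewrite expr2 mulr_suml.
have E : (size u)%:R * \sum_(x <- u) a x ^+ 2 =
  \sum_(x <- u) \sum_(y <- u) (a x ^+ 2 + a y ^+ 2) / 2.
  symmetry.
  have e1 x : \sum_(y <- u) (a x ^+ 2 + a y ^+ 2) / 2 =
      \sum_(y <- u) (a x ^+ 2 / 2 + a y ^+ 2 / 2) by apply: eq_bigr => y _; rewrite mulrDl.
  under eq_bigr => x _ do rewrite e1.
  under eq_bigr do rewrite big_split /= sumc.
  rewrite big_split /= sumc sumrMnl -!mulr_suml.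
rewrite -[_ *+ size u]mulr_natl -[_ *+ size u]mulr_natl.
by rewrite -mulrDr -splitr.
rewrite E; apply: ler_sum => x _; rewrite mulr_sumr; apply: ler_sum => y _.
have hy : `|a x| * `|a y| <= (a x ^+ 2 + a y ^+ 2) / 2.
  rewrite ler_pdivlMr // -(real_normK (num_real (a x))) -(real_normK (num_real (a y))).
  have := sqr_ge0 (`|a x| - `|a y|); rewrite sqrrB; lra.
exact: hy.
Qed.

Lemma shift_sum (f : {mpoly R[n]}) (s : seq 'X_{1..n}) (I : 'X_{1..n}) :
  uniq s -> \sum_(J <- s) `|scoef f (I + J)%MM| <= \sum_(P <- msupp f) `|scoef f P|.
Proof.
move=> us.
rewrite -(big_map (fun J => (I + J)%MM) xpredT (fun P => `|scoef f P|)).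
rewrite (bigID (fun P => P \in msupp f)) /= [X in _ + X]big1 ?addr0; last first.
  by move=> P /negbTE h; rewrite scoef0 ?h // normr0.
rewrite -big_filter; apply: sum_sub.
- by rewrite filter_uniq // map_inj_uniq //; exact: addmI.
- exact: msupp_uniq.
- by move=> x; rewrite mem_filter => /andP[].
- by move=> x; rewrite normr_ge0.
Qed.
End C.

Lemma sq_mono (R : realFieldType) (x y : R) : 0 <= x -> x <= y -> x ^+ 2 <= y ^+ 2.
Proof. by move=> x0 xy; rewrite !expr2 ler_pM. Qed.

Theorem lemma5 (R : realFieldType) (n : nat) (f : {mpoly R[n]}) (k : nat) :
  f != 0 ->
  \tr (Bmat f k *m Bmat f k)
    <= (size (msupp f))%:R * \tr (Bmat f k)
       * (\sum_(P <- msupp f) scoef f P ^+ 2).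
Proof.
move=> _.
set c := (size (msupp f))%:R * \sum_(P <- msupp f) scoef f P ^+ 2.
have Hc : (\sum_(P <- msupp f) `|scoef f P|) ^+ 2 <= c by exact: cs.
have S0 : 0 <= \sum_(P <- msupp f) `|scoef f P| by apply: sumr_ge0 => *.
have -> : (size (msupp f))%:R * \tr (Bmat f k) * (\sum_(P <- msupp f) scoef f P ^+ 2)
   = c * \tr (Bmat f k) by rewrite /c; ring.
apply: key => [i|j].
- apply: le_trans Hc; apply: sq_mono; first by apply: sumr_ge0 => *.
  have -> : \sum_j `|Mmat f k i j| = \sum_(J <- colidx f k) `|scoef f (nth 0%MM (rowidx n k) i + J)%MM|.
    by rewrite (big_nth 0%MM) big_mkord; apply: eq_bigr => j _; rewrite mxE.
  exact/shift_sum/colidx_uniq.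
- apply: le_trans Hc; apply: sq_mono; first by apply: sumr_ge0 => *.
  have -> : \sum_i `|Mmat f k i j| = \sum_(I <- rowidx n k) `|scoef f (nth 0%MM (colidx f k) j + I)%MM|.
    by rewrite (big_nth 0%MM) big_mkord; apply: eq_bigr => i _; rewrite mxE addmC.
  exact/shift_sum/rowidx_uniq.
Qed.
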